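(* Let $X$ be a random variable taking values in a finite set $\mathcal X$ of size $s \ge 1$, and let $\ell := \log s - \mathcal H(X)$. Then for every $x \in \mathcal X$, \[ \mathbb P(X = x) \le \frac{2}{s} + \ell. \]
   Context: All logarithms are base $2$. The Shannon entropy of $X$ is $\mathcal H(X) = -\sum_{x\in\mathcal X}\mathbb P(X=x)\log \mathbb P(X=x)$, with the convention $0\log 0 = 0$. *)

(* Defs.v *)
From mathcomp Require Import all_boot all_order all_algebra.
From mathcomp Require Import reals exp.
Set Implicit Arguments. Unset Strict Implicit. Unset Printing Implicit Defensive.
Import Order.TTheory GRing.Theory Num.Theory.
Local Open Scope ring_scope.

Definition log2 {R : realType} (x : R) : R := ln x / ln 2.

(* The law of a random variable X with values in the finite set T is
   a probability mass function p : T -> R, p x = P(X = x). *)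
Definition is_pmf {R : realType} {T : finType} (p : T -> R) : Prop :=
  (forall x, 0 <= p x) /\ \sum_(x : T) p x = 1.

Definition entropy {R : realType} {T : finType} (p : T -> R) : R :=
  - \sum_(x : T) (if p x == 0 then 0 else p x * log2 (p x)).

(* Main.v *)
Require Import Defs.
From mathcomp Require Import all_boot all_order all_algebra.
From mathcomp Require Import reals exp.
From mathcomp Require Import ring lra.
Import Order.TTheory GRing.Theory Num.Theory.
Local Open Scope ring_scope.

Lemma ln_ge1V (R : realType) (t : R) : 0 < t -> 1 - t^-1 <= ln t.
Proof.
move=> t0.
have h := @le_ln1Dx R (t^-1 - 1).
rewrite (addrC 1) subrK lnV ?posrE // in h.
have : -1 < t^-1 - 1 by have := invr_gt0 t; rewrite t0 => /idP; lra.
move/h => H; lra.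
Qed.

Theorem lemma3p3 (R : realType) (T : finType) (p : T -> R) :
  (1 <= #|T|)%N -> is_pmf p ->
  forall x : T,
    p x <= 2 / (#|T|%:R) + (log2 (#|T|%:R : R) - entropy p).
Proof.
move=> hT [p0 p1] x.
set s : R := #|T|%:R.
have s0 : 0 < s by rewrite /s ltr0n.
set L : R := ln 2.
have L0 : 0 < L by rewrite /L ln_gt0 // ltr1n.
have L12 : 1/2 <= L.
  have := @ln_ge1V R 2 ltac:(lra); rewrite -/L; lra.
pose h y := p y * ln s + (if p y == 0 then 0 else p y * ln (p y)).
have key : log2 s - entropy p = (\sum_y h y) / L.
  rewrite /entropy /log2 opprK /h big_split /= -!/L.
  rewrite -mulr_suml p1 mul1r mulrDl; congr (_ + _).
  rewrite mulr_suml; apply: eq_bigr => y _.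
  by case: ifP => _; rewrite ?mul0r // mulrA.
have hy y : p y - s^-1 <= h y.
  rewrite /h; case: eqP => [->|/eqP py0].
    by rewrite mul0r addr0 sub0r lerNl oppr0 invr_ge0 ltW.
  have py : 0 < p y by rewrite lt_neqAle eq_sym py0 p0.
  rewrite -mulrDr -lnM ?posrE //.
  have := @ln_ge1V _ _ (mulr_gt0 s0 py).
  move/(ler_wpM2l (ltW py)).
  have E : p y * (s * p y)^-1 = s^-1.
    by rewrite invfM mulrCA mulfV ?gt_eqF // mulr1.
  by rewrite mulrBr mulr1 E mulrC.
have hx : p x * (1 + L) - 2 / s <= h x.
  rewrite /h; case: eqP => [->|/eqP px0].
    by rewrite !mul0r addr0 sub0r lerNl oppr0 divr_ge0 // ltW.
  have px : 0 < p x by rewrite lt_neqAle eq_sym px0 p0.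
  rewrite -mulrDr -lnM ?posrE //.
  have sp : 0 < s * p x by rewrite mulr_gt0.
  have two0 : (0:R) < 2 by lra.
  have := @ln_ge1V _ _ (divr_gt0 sp two0).
  have -> : ln (s * p x / 2) = ln (s * p x) - L by rewrite ln_div.
  have -> : (s * p x / 2)^-1 = 2 / (s * p x) by rewrite invf_div.
  move/(ler_wpM2l (ltW px)).
  have E : p x * (2 / (s * p x)) = 2 / s.
    have ? : p x != 0 by rewrite gt_eqF.
    have ? : s != 0 by rewrite gt_eqF.
    by field; rewrite -/s; apply/andP.
  rewrite mulrBr mulr1 E mulrBr => H.
  rewrite mulrDr mulr1; lra.
have sum0 : \sum_y (p y - s^-1) = 0.
  rewrite sumrB p1 sumr_const -mulr_natr -/s mulVf ?subrr //.
  by rewrite gt_eqF.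
have sumh : \sum_y h y >= p x * L - s^-1.
  rewrite (bigD1 x) //=.
  have : \sum_(y | y != x) (p y - s^-1) <= \sum_(y | y != x) h y.
    by apply: ler_sum => y _; apply: hy.
  move: sum0; rewrite (bigD1 x) //= => S0 S1.
  lra.
rewrite key.
have sinv : 0 < s^-1 by rewrite invr_gt0.
have A : (p x * L - s^-1) / L <= (\sum_y h y) / L.
  by rewrite ler_wpM2r // invr_ge0 ltW.
have B : (p x * L - s^-1) / L = p x - s^-1 / L.
  by rewrite mulrBl mulfK ?gt_eqF.
have C : s^-1 / L <= 2 * s^-1.
  rewrite ler_pdivrMr //; nra.
rewrite B in A.
rewrite addrC -(subrK (s^-1 / L) (p x)); exact: lerD.
Qed.
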